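(* For every integer $k\ge1$, \[ \sum_{n=1}^\infty\frac{Q_{k+1}(H_n,H_n^{(2)},\dots,H_n^{(k+1)})}{(n+1)^2}+\sum_{n=1}^\infty\frac{Q_k(H_n,H_n^{(2)},\dots,H_n^{(k)})}{n^3}=(k+2)\zeta(k+3). \]
   Context: $H_n^{(r)}=\sum_{t=1}^n t^{-r}$, $H_n=H_n^{(1)}$. For $n\ge1$, $Q_n(y_1,\dots,y_n)=\sum_{m_1+2m_2+\cdots=n}\frac{1}{m_1!m_2!\cdots}\prod_{i\ge1}(y_i/i)^{m_i}$ (sum over tuples of nonnegative integers), i.e. $Q_n(p_1,\dots,p_n)=h_n$, the complete symmetric function. $\zeta$ is the Riemann zeta function. *)

(* Defs.v *)
From Stdlib Require Import Reals Lra Lia Arith.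
Open Scope R_scope.

Fixpoint Hr (n r : nat) : R :=
  match n with
  | O => 0
  | S m => Hr m r + / (INR (S m)) ^ r
  end.

(* Nested-sum expansion of
     Q_n(y_1,...,y_n) = sum_{m_1 + 2 m_2 + ... = n} prod_i (y_i/i)^{m_i} / m_i!.
   Qaux f j r y sums, over the multiplicities m_j, m_{j+1}, ..., m_{j+f-1}
   (remaining multiplicities forced to 0) with j m_j + (j+1) m_{j+1} + ... = r,
   the product prod (y_i/i)^{m_i}/m_i!. *)
Fixpoint Qaux (f j r : nat) (y : nat -> R) : R :=
  match r with
  | O => 1
  | S _ =>
    match f with
    | O => 0
    | S f' =>
      sum_f_R0 (fun m => (y j / INR j) ^ m / INR (fact m)
                          * Qaux f' (S j) (r - j * m)%nat y) (r / j)
    end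
  end.

Definition Q (n : nat) (y : nat -> R) : R := Qaux n 1 n y.

(* Main.v *)
Require Import Defs.
From Stdlib Require Import Reals Lra Lia Arith.
Open Scope R_scope.

Fixpoint sm (n : nat) (f : nat -> R) : R :=
  match n with O => 0 | S n' => sm n' f + f n' end.

Lemma sm_ext n f g : (forall i, (i < n)%nat -> f i = g i) -> sm n f = sm n g.
Proof. induction n; simpl; intros H; [reflexivity|].
  rewrite IHn by (intros; apply H; lia). rewrite H by lia. reflexivity. Qed.

Lemma sm_plus n f g : sm n (fun i => f i + g i) = sm n f + sm n g.
Proof. induction n; simpl; [lra|]. rewrite IHn. lra. Qed.

Lemma sm_minus n f g : sm n (fun i => f i - g i) = sm n f - sm n g.
Proof. induction n; simpl; [lra|]. rewrite IHn. lra. Qed.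

Lemma sm_scal n c f : sm n (fun i => c * f i) = c * sm n f.
Proof. induction n; simpl; [lra|]. rewrite IHn. lra. Qed.

Lemma sm_shift n f : sm (S n) f = f O + sm n (fun i => f (S i)).
Proof. induction n; simpl in *; [lra|]. rewrite IHn. lra. Qed.

Lemma sm_add a b f : sm (a+b) f = sm a f + sm b (fun i => f (a+i)%nat).
Proof. induction b; simpl; [rewrite Nat.add_0_r; lra|].
  rewrite Nat.add_succ_r. simpl. rewrite IHb. lra. Qed.

Lemma sm_le n f g : (forall i, (i<n)%nat -> f i <= g i) -> sm n f <= sm n g.
Proof. induction n; simpl; intros H; [lra|].
  assert (sm n f <= sm n g) by (apply IHn; intros; apply H; lia).
  assert (f n <= g n) by (apply H; lia). lra. Qed.

Lemma sm_nonneg n f : (forall i, (i<n)%nat -> 0 <= f i) -> 0 <= sm n f.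
Proof. intros H. replace 0 with (sm n (fun _ => 0)).
  apply sm_le; auto. induction n; simpl; [lra|]. rewrite IHn; [lra|].
  intros; apply H; lia. Qed.

Lemma sm_zero n f : (forall i, (i<n)%nat -> f i = 0) -> sm n f = 0.
Proof. induction n; simpl; intros H; [lra|]. rewrite IHn by (intros; apply H; lia).
  rewrite H by lia. lra. Qed.

Lemma sm_swap n m f : sm n (fun i => sm m (fun j => f i j)) = sm m (fun j => sm n (fun i => f i j)).
Proof. induction n; simpl.
  - symmetry; apply sm_zero; reflexivity.
  - rewrite IHn. rewrite <- sm_plus. reflexivity. Qed.

Lemma sm_const_le n f c : (forall i, (i<n)%nat -> f i <= c) -> sm n f <= INR n * c.
Proof. induction n; cbn [sm]; intros H; [simpl; lra|].
  assert (sm n f <= INR n * c) by (apply IHn; intros; apply H; lia).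
  assert (f n <= c) by (apply H; lia). rewrite S_INR. lra. Qed.

Lemma sum_f_R0_sm f N : sum_f_R0 f N = sm (S N) f.
Proof. induction N; simpl; [lra|]. rewrite IHN. simpl. lra. Qed.

Lemma sm_mono n d f : (forall i, 0 <= f i) -> sm n f <= sm (n+d) f.
Proof. intros H. rewrite sm_add. assert (0 <= sm d (fun i => f (n+i)%nat)).
  apply sm_nonneg; auto. lra. Qed.


Fixpoint F (J m : nat) : nat -> R :=
  match m with
  | O => fun k => match k with O => 1 | S _ => 0 end
  | S m' => fix G (k : nat) : R :=
      match k with
      | O => F J m' O / INR (J + S m')
      | S k' => (F J m' (S k') + G k') / INR (J + S m')
      end
  end.
Definition pv (f : nat -> R) (k : nat) : R := match k with O => 0 | S k' => f k' end.

Lemma pv_S f k : pv f (S k) = f k. Proof. reflexivity. Qed.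
Lemma pv_0 f : pv f O = 0. Proof. reflexivity. Qed.

Lemma F_S J m k : F J (S m) k = (F J m k + pv (F J (S m)) k) / INR (J + S m).
Proof. destruct k; rewrite ?pv_S, ?pv_0; [|reflexivity]. rewrite Rplus_0_r. reflexivity. Qed.

Lemma INR_pos n : (0 < n)%nat -> 0 < INR n.
Proof. intros; apply lt_0_INR; lia. Qed.

Lemma Rdiv_le_0_compat a b : 0 <= a -> 0 < b -> 0 <= a / b.
Proof. intros. unfold Rdiv. apply Rmult_le_pos; auto. left; apply Rinv_0_lt_compat; auto. Qed.

Lemma F_nonneg J m k : 0 <= F J m k.
Proof. revert k; induction m; intros k.
  - destruct k; simpl; lra.
  - induction k.
    + rewrite F_S. rewrite ?pv_S, ?pv_0. apply Rdiv_le_0_compat. specialize (IHm O). rewrite Rplus_0_r. exact IHm. apply INR_pos; lia.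
    + rewrite F_S. rewrite ?pv_S, ?pv_0. apply Rdiv_le_0_compat. specialize (IHm (S k)). apply Rplus_le_le_0_compat; [exact IHm|exact IHk]. apply INR_pos; lia.
Qed.

Lemma pv_nonneg J m k : 0 <= pv (F J m) k.
Proof. destruct k; simpl; [lra| apply F_nonneg]. Qed.

Lemma F_L2 J m k : INR (S J) * F J (S m) k = F (S J) m k + pv (F J (S m)) k.
Proof.
  revert k; induction m; intros k.
  - induction k.
    + rewrite F_S. rewrite ?pv_S, ?pv_0. simpl F. rewrite Nat.add_1_r. field. apply not_0_INR; lia.
    + rewrite F_S. rewrite ?pv_S, ?pv_0. rewrite Nat.add_1_r. simpl (F J 0 (S k)). simpl (F (S J) 0 (S k)).
      field. apply not_0_INR; lia.
  - induction k.
    + rewrite (F_S J (S m)). rewrite (F_S (S J) m). rewrite ?pv_S, ?pv_0.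
      assert (H0 := IHm O); rewrite ?pv_S, ?pv_0 in H0; rewrite <- H0.
      replace (S J + S m)%nat with (J + S (S m))%nat by lia. field. apply not_0_INR; lia.
    + rewrite (F_S J (S m)). rewrite (F_S (S J) m). 
      replace (S J + S m)%nat with (J + S (S m))%nat by lia.
      assert (Hy : INR (J + S (S m)) <> 0) by (apply not_0_INR; lia).
      rewrite ?pv_S, ?pv_0.
      assert (E1 := F_S J (S m) k).
      assert (E2 := IHm (S k)). rewrite ?pv_S, ?pv_0 in E2.
      assert (E3 : INR (J + S (S m)) * F J (S (S m)) k = F J (S m) k + pv (F J (S (S m))) k).
      { rewrite (F_S J (S m) k) at 1. field. exact Hy. }
      replace (INR (S J) * ((F J (S m) (S k) + F J (S (S m)) k) / INR (J + S (S m))))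
        with ((INR (S J) * F J (S m) (S k) + INR (S J) * F J (S (S m)) k) / INR (J + S (S m)))
        by (field; exact Hy).
      rewrite E2, IHk.
      replace (F J (S (S m)) k) with ((F J (S m) k + pv (F J (S (S m))) k) / INR (J + S (S m)))
        by (rewrite <- E3; field; exact Hy).
      field. exact Hy.
Qed.

Lemma F_id1 J m k : INR m * F J (S m) k = F J m k - F (S J) m k.
Proof.
  assert (A := F_L2 J m k). assert (B := F_S J m k).
  assert (Hy : INR (J + S m) <> 0) by (apply not_0_INR; lia).
  assert (C : INR (J + S m) * F J (S m) k = F J m k + pv (F J (S m)) k) by (rewrite B at 1; field; exact Hy).
  replace (INR m) with (INR (J + S m) - INR (S J)) by (rewrite !plus_INR, !S_INR; ring).
  lra.
Qed.

Lemma F_1 J k : F J 1 k = / INR (S J) ^ (S k).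
Proof. induction k.
  - rewrite F_S, pv_0. change (F J 0 0) with 1. rewrite Nat.add_1_r. rewrite pow_1. field. apply not_0_INR; lia.
  - rewrite F_S. rewrite ?pv_S, ?pv_0. rewrite IHk. change (F J 0 (S k)) with 0. rewrite Nat.add_1_r.
    assert (INR (S J) <> 0) by (apply not_0_INR; lia).
    rewrite <- (tech_pow_Rmult _ (S k)). field. split; auto. apply pow_nonzero; auto.
Qed.

Lemma F_0 J m : F J m 0 * INR (fact (J + m)) = INR (fact J).
Proof. induction m.
  - change (F J 0 0) with 1. rewrite Nat.add_0_r. ring.
  - rewrite F_S. rewrite ?pv_S, ?pv_0. replace (J + S m)%nat with (S (J+m)) by lia.
    rewrite fact_simpl, mult_INR. rewrite <- IHm. field. apply not_0_INR; lia.
Qed.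


Definition g N J k := sm N (fun n => INR (fact n) / INR (S n) * F J (S n) k).
Definition V N J k := sm N (fun n => INR (fact n) * F J (S (S n)) k).
Definition U n J k := INR (fact n) * F J (S n) k.

Lemma sm_tele n u : sm n (fun i => u i - u (S i)) = u O - u n.
Proof. induction n; cbn [sm]; [lra|]. rewrite IHn. lra. Qed.

Lemma g_diff N J k : g N J k - g N (S J) k = V N J k.
Proof. unfold g, V. rewrite <- sm_minus. apply sm_ext. intros n _.
  assert (A := F_id1 J (S n) k).
  assert (INR (S n) <> 0) by (apply not_0_INR; lia).
  replace (INR (fact n) / INR (S n) * F J (S n) k - INR (fact n) / INR (S n) * F (S J) (S n) k)
    with (INR (fact n) / INR (S n) * (F J (S n) k - F (S J) (S n) k)) by ring.
  rewrite <- A. field. auto. Qed.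

Lemma V_rec N J k : INR (S J) * V N J k - pv (fun k => V N J k) k = U O J k - U N J k.
Proof.
  assert (E : INR (S J) * V N J k - pv (fun k => V N J k) k =
              sm N (fun n => INR (fact n) * F (S J) (S n) k)).
  { unfold V. destruct k.
    - rewrite pv_0, Rminus_0_r, <- sm_scal. apply sm_ext; intros n _.
      assert (A := F_L2 J (S n) O). rewrite pv_0, Rplus_0_r in A. rewrite <- A. ring.
    - rewrite pv_S, <- sm_scal, <- sm_minus. apply sm_ext; intros n _.
      assert (A := F_L2 J (S n) (S k)). rewrite pv_S in A.
      replace (INR (S J) * (INR (fact n) * F J (S (S n)) (S k)) - INR (fact n) * F J (S (S n)) k)
        with (INR (fact n) * (INR (S J) * F J (S (S n)) (S k) - F J (S (S n)) k)) by ring.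
      rewrite A. ring. }
  rewrite E. unfold U. rewrite <- (sm_tele N (fun n => INR (fact n) * F J (S n) k)).
  apply sm_ext; intros n _. assert (A := F_id1 J (S n) k).
  rewrite fact_simpl, mult_INR.
  replace (INR (S n) * INR (fact n) * F J (S (S n)) k) with (INR (fact n) * (INR (S n) * F J (S (S n)) k)) by ring.
  rewrite A. ring.
Qed.

Lemma U_nonneg n J k : 0 <= U n J k.
Proof. unfold U. apply Rmult_le_pos; [apply pos_INR| apply F_nonneg]. Qed.

Lemma U0 J k : U O J k = / INR (S J) ^ (S k).
Proof. unfold U. rewrite F_1. simpl fact. rewrite INR_1. ring. Qed.

Lemma V_bounds N J k :
  V N J k <= INR (S k) / INR (S J) ^ (S (S k)) /\
  INR (S k) / INR (S J) ^ (S (S k)) - sm (S k) (fun i => U N J i) <= V N J k.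
Proof.
  assert (Ha : 1 <= INR (S J)) by (rewrite S_INR; assert (0 <= INR J) by apply pos_INR; lra).
  set (a := INR (S J)) in *.
  assert (Ha0 : 0 < a) by lra.
  induction k.
  - assert (R := V_rec N J O). rewrite pv_0, Rminus_0_r, U0 in R.
    assert (Hv : V N J 0 = (/ a ^ 1 - U N J 0) / a) by (fold a in R; rewrite <- R; field; lra).
    assert (HU := U_nonneg N J 0).
    rewrite Hv. cbn [sm]. rewrite Rplus_0_l. change (INR 1) with 1.
    assert (E1 : 1 / a ^ 2 = / a ^ 1 / a) by (field; lra).
    rewrite E1. split.
    + unfold Rdiv. apply Rmult_le_compat_r. left; apply Rinv_0_lt_compat; lra. lra.
    + assert (U N J 0 / a <= U N J 0).
      { unfold Rdiv. rewrite <- (Rmult_1_r (U N J 0)) at 2. apply Rmult_le_compat_l; auto.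
        rewrite <- Rinv_1. apply Rinv_le_contravar; lra. }
      unfold Rdiv in *. lra.
  - destruct IHk as [IH1 IH2].
    assert (R := V_rec N J (S k)). rewrite pv_S, U0 in R. fold a in R.
    assert (Hv : V N J (S k) = (V N J k + (/ a ^ (S (S k)) - U N J (S k))) / a) by (rewrite <- R; field; lra).
    assert (HU := U_nonneg N J (S k)).
    assert (HS : 0 <= sm (S k) (fun i => U N J i)) by (apply sm_nonneg; intros; apply U_nonneg).
    assert (Hp : 0 < a ^ (S (S k))) by (apply pow_lt; lra).
    rewrite Hv. cbn [sm]. fold (sm k (fun i => U N J i)).
    assert (E1 : INR (S (S k)) / a ^ S (S (S k)) = (INR (S k) / a ^ (S (S k)) + / a ^ (S (S k))) / a).
    { rewrite (S_INR (S k)). rewrite <- (tech_pow_Rmult a (S (S k))). field. lra. }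
    rewrite E1. split.
    + unfold Rdiv. apply Rmult_le_compat_r. left; apply Rinv_0_lt_compat; lra. unfold Rdiv in IH1. lra.
    + set (s := sm (S k) (fun i => U N J i)) in *.
      change (sm k (fun i => U N J i) + U N J k) with s.
      assert ((s + U N J (S k)) / a <= s + U N J (S k)).
      { unfold Rdiv. rewrite <- (Rmult_1_r (s + U N J (S k))) at 2. apply Rmult_le_compat_l; [lra|].
        rewrite <- Rinv_1. apply Rinv_le_contravar; lra. }
      unfold Rdiv in *.
      assert (Hia : 0 < / a) by (apply Rinv_0_lt_compat; lra).
      assert (H2 : 0 <= (V N J k - (INR (S k) * / a ^ S (S k) - s)) * / a) by (apply Rmult_le_pos; lra).
      lra.
Qed.

Lemma g_tele N M k : g N 0 k = sm M (fun J => V N J k) + g N M k.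
Proof. induction M; cbn [sm]; [lra|]. rewrite IHM. rewrite <- (g_diff N M k). lra. Qed.

Lemma F_le_sum J m k : F J (S m) k <= sm (S k) (fun i => F J m i).
Proof.
  assert (Hy : 1 <= INR (J + S m)) by (rewrite <- INR_1; apply le_INR; lia).
  induction k.
  - rewrite F_S, pv_0. cbn [sm]. rewrite Rplus_0_l, Rplus_0_r.
    assert (H := F_nonneg J m 0).
    unfold Rdiv. rewrite <- (Rmult_1_r (F J m 0)) at 2. apply Rmult_le_compat_l; auto.
    rewrite <- Rinv_1. apply Rinv_le_contravar; lra.
  - rewrite F_S, pv_S. 
    assert (H := F_nonneg J m (S k)). assert (H' := F_nonneg J (S m) k).
    apply Rle_trans with (F J m (S k) + F J (S m) k).
    + unfold Rdiv. rewrite <- (Rmult_1_r (F J m (S k) + F J (S m) k)) at 2. apply Rmult_le_compat_l; [lra|].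
      rewrite <- Rinv_1. apply Rinv_le_contravar; lra.
    + change (sm (S (S k)) (fun i => F J m i)) with (sm (S k) (fun i => F J m i) + F J m (S k)). lra.
Qed.

Lemma F_bound J m k : F J (S m) k <= INR (S k) ^ m / INR (S J).
Proof.
  assert (HJ : 1 <= INR (S J)) by (rewrite <- INR_1; apply le_INR; lia).
  revert k; induction m; intros k.
  - rewrite F_1. rewrite pow_O. unfold Rdiv. rewrite Rmult_1_l.
    apply Rinv_le_contravar; [lra|]. rewrite <- tech_pow_Rmult.
    rewrite <- (Rmult_1_r (INR (S J))) at 1. apply Rmult_le_compat_l; [lra|].
    apply pow_R1_Rle; lra.
  - apply Rle_trans with (sm (S k) (fun i => F J (S m) i)); [apply F_le_sum|].
    apply Rle_trans with (INR (S k) * (INR (S k) ^ m / INR (S J))).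
    + apply sm_const_le. intros i Hi. apply Rle_trans with (INR (S i) ^ m / INR (S J)); [apply IHm|].
      unfold Rdiv. apply Rmult_le_compat_r; [left; apply Rinv_0_lt_compat; lra|].
      apply pow_incr. split; [apply pos_INR| apply le_INR; lia].
    + rewrite <- tech_pow_Rmult. unfold Rdiv. lra.
Qed.

Lemma g_small N M k : g N M k <= sm N (fun n => INR (fact n) * INR (S k) ^ n) / INR (S M).
Proof.
  assert (HM : 1 <= INR (S M)) by (rewrite <- INR_1; apply le_INR; lia).
  unfold g.
  replace (sm N (fun n => INR (fact n) * INR (S k) ^ n) / INR (S M)) with
    (sm N (fun n => / INR (S M) * (INR (fact n) * INR (S k) ^ n))) by (rewrite sm_scal; unfold Rdiv; ring).
  apply sm_le. intros n _.
  assert (Hf : 1 <= INR (S n)) by (rewrite <- INR_1; apply le_INR; lia).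
  assert (H0 : 0 <= INR (fact n)) by apply pos_INR.
  apply Rle_trans with (INR (fact n) * F M (S n) k).
  - rewrite (Rmult_comm (INR (fact n) / INR (S n))), (Rmult_comm (INR (fact n))). unfold Rdiv. apply Rmult_le_compat_l; [apply F_nonneg|].
    rewrite <- (Rmult_1_r (INR (fact n))) at 2. apply Rmult_le_compat_l; auto.
    rewrite <- Rinv_1. apply Rinv_le_contravar; lra.
  - assert (B := F_bound M n k). unfold Rdiv in B.
    replace (/ INR (S M) * (INR (fact n) * INR (S k) ^ n)) with (INR (fact n) * (INR (S k) ^ n * / INR (S M))) by ring.
    apply Rmult_le_compat_l; auto.
Qed.


Fixpoint h (n : nat) : nat -> R :=
  match n with
  | O => fun k => match k with O => 1 | S _ => 0 end
  | S n' => fix G (k : nat) : R :=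
      match k with
      | O => 1
      | S k' => h n' (S k') + G k' / INR (S n')
      end
  end.

Lemma h_SS n k : h (S n) (S k) = h n (S k) + h (S n) k / INR (S n).
Proof. reflexivity. Qed.
Lemma h_n0 n : h n 0 = 1.
Proof. destruct n; reflexivity. Qed.
Lemma h_0S k : h 0 (S k) = 0.
Proof. reflexivity. Qed.

Lemma h_F n k : h n k = INR (fact n) * F 0 n k.
Proof.
  revert k; induction n; intros k.
  - destruct k; simpl; lra.
  - induction k.
    + rewrite h_n0. assert (A := F_0 0 (S n)). simpl (0 + S n)%nat in A. simpl (fact 0) in A.
      rewrite INR_1 in A. rewrite <- A. ring.
    + rewrite h_SS, IHk, IHn. rewrite (F_S 0 n (S k)), pv_S. simpl (0 + S n)%nat.
      rewrite fact_simpl, mult_INR. field. apply not_0_INR; lia.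
Qed.

Lemma h_nonneg n k : 0 <= h n k.
Proof. rewrite h_F. apply Rmult_le_pos; [apply pos_INR|apply F_nonneg]. Qed.

Lemma h_mono1 n k : h n k <= h (S n) k.
Proof. destruct k.
  - rewrite !h_n0; lra.
  - rewrite h_SS. assert (0 <= h (S n) k / INR (S n)).
    { unfold Rdiv. apply Rmult_le_pos; [apply h_nonneg|left; apply Rinv_0_lt_compat, lt_0_INR; lia]. }
    lra.
Qed.

Lemma h_mono n d k : h n k <= h (n + d) k.
Proof. induction d. rewrite Nat.add_0_r; lra.
  rewrite Nat.add_succ_r. eapply Rle_trans; [apply IHd| apply h_mono1]. Qed.

Lemma h_1 k : h 1 k = 1.
Proof. induction k. reflexivity. rewrite h_SS, IHk, h_0S. simpl (INR 1). field. Qed.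

Definition conv (q b : nat -> R) (k : nat) : R := sm (S k) (fun j => q j * b (k - j)%nat).

Lemma conv_0 q b : conv q b 0 = q 0%nat * b 0%nat.
Proof. unfold conv. cbn [sm]. simpl (0 - 0)%nat. ring. Qed.

Lemma C1 q n k : conv q (h (S n)) (S k) = conv q (h n) (S k) + / INR (S n) * conv q (h (S n)) k.
Proof.
  unfold conv. change (sm (S (S k)) ?f) with (sm (S k) f + f (S k)).
  cbv beta. rewrite Nat.sub_diag, !h_n0. rewrite <- sm_scal.
  assert (sm (S k) (fun j => q j * h (S n) (S k - j)%nat) =
          sm (S k) (fun j => q j * h n (S k - j)%nat) + sm (S k) (fun i => / INR (S n) * (q i * h (S n) (k - i)%nat))).
  { rewrite <- sm_plus. apply sm_ext. intros j Hj. replace (S k - j)%nat with (S (k - j)) by lia.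
    rewrite h_SS. unfold Rdiv. ring. }
  rewrite H. ring.
Qed.

Lemma C2 n k : conv (fun j => / INR (S n) ^ (S j)) (h (S n)) (S k) =
   / INR (S n) * h (S n) (S k) + / INR (S n) * conv (fun j => / INR (S n) ^ (S j)) (h (S n)) k.
Proof.
  unfold conv. rewrite sm_shift. rewrite Nat.sub_0_r. rewrite <- sm_scal.
  f_equal. rewrite pow_1. reflexivity.
  apply sm_ext. intros j Hj. simpl (S k - S j)%nat.
  rewrite <- (tech_pow_Rmult _ (S j)). 
  assert (INR (S n) <> 0) by (apply not_0_INR; lia).
  rewrite Rinv_mult. ring.
Qed.

Lemma conv_plus q1 q2 b k : conv (fun j => q1 j + q2 j) b k = conv q1 b k + conv q2 b k.
Proof. unfold conv. rewrite <- sm_plus. apply sm_ext; intros; ring. Qed.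

Lemma h_newton n k : INR (S k) * h n (S k) = conv (fun j => Hr n (S j)) (h n) k.
Proof.
  revert k; induction n; intros k.
  - rewrite h_0S. unfold conv. rewrite sm_zero; [ring|]. intros j _. simpl Hr. ring.
  - assert (Eq : forall k, conv (fun j => Hr (S n) (S j)) (h (S n)) k =
       conv (fun j => Hr n (S j)) (h (S n)) k + conv (fun j => / INR (S n) ^ (S j)) (h (S n)) k).
    { intros k'. rewrite <- conv_plus. reflexivity. }
    induction k.
    + rewrite Eq, !conv_0, !h_n0. rewrite h_SS, h_n0. 
      assert (A := IHn O). rewrite conv_0, h_n0 in A. rewrite pow_1.
      change (INR 1) with 1 in *. rewrite Rmult_1_r. rewrite Rmult_1_l in A. rewrite A.
      field. apply not_0_INR; lia.
    + rewrite Eq, C1, C2. rewrite <- (IHn (S k)).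
      assert (E := Eq k). rewrite <- IHk in E.
      replace (conv (fun j : nat => Hr n (S j)) (h (S n)) k) with
        (INR (S k) * h (S n) (S k) - conv (fun j : nat => / INR (S n) ^ S j) (h (S n)) k) by lra.
      rewrite h_SS. rewrite (S_INR (S k)). field. apply not_0_INR; lia.
Qed.


Definition Am (y : nat -> R) (j m : nat) : R := (y j / INR j) ^ m / INR (fact m).

Lemma QS y f j r : (1 <= j)%nat ->
  Qaux (S f) j r y = sum_f_R0 (fun m => Am y j m * Qaux f (S j) (r - j * m) y) (r / j).
Proof. intros Hj. destruct r.
  - rewrite Nat.Div0.div_0_l. cbn [sum_f_R0]. unfold Am. rewrite pow_O. rewrite Nat.mul_0_r.
    destruct f; simpl; field.
  - reflexivity.
Qed.

Lemma ext_sum (G : nat -> R) j r B : (1 <= j)%nat -> (r / j <= B)%nat ->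
  sum_f_R0 G (r / j) = sm (S B) (fun m => if (j * m <=? r)%nat then G m else 0).
Proof.
  intros Hj HB. rewrite sum_f_R0_sm.
  replace (S B) with (S (r / j) + (B - r / j))%nat by lia.
  rewrite sm_add. rewrite (sm_zero (B - r/j)).
  - rewrite Rplus_0_r. apply sm_ext. intros i Hi.
    assert (j * i <= r)%nat.
    { assert (j * i <= j * (r / j))%nat by (apply Nat.mul_le_mono_l; lia).
      assert (Hm := Nat.Div0.mul_div_le r j). lia. }
    apply Nat.leb_le in H. rewrite H. reflexivity.
  - intros i _. assert (H := Nat.mul_succ_div_gt r j ltac:(lia)).
    assert (j * S (r / j) <= j * (S (r / j) + i))%nat by (apply Nat.mul_le_mono_l; lia).
    destruct (Nat.leb_spec (j * (S (r / j) + i)) r); [lia|reflexivity].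
Qed.

Lemma div_le_self r j : (1 <= j)%nat -> (r / j <= r)%nat.
Proof. intros. apply Nat.Div0.div_le_upper_bound. nia. Qed.

Lemma QE y f j r B : (1 <= j)%nat -> (r <= B)%nat ->
  Qaux (S f) j r y = sm (S B) (fun m => if (j * m <=? r)%nat then Am y j m * Qaux f (S j) (r - j * m) y else 0).
Proof. intros Hj HB. rewrite QS by auto. apply ext_sum; auto.
  assert (H := div_le_self r j Hj). lia. Qed.

Lemma sm_if (c : bool) n (a : R) X : sm n (fun m => if c then a * X m else 0) = if c then a * sm n X else 0.
Proof. destruct c. apply sm_scal. apply sm_zero. auto. Qed.

Lemma NQ y f : forall j r, (1 <= j)%nat ->
  INR r * Qaux f j r y = sm f (fun i => if (j + i <=? r)%nat then y (j + i)%nat * Qaux f j (r - (j + i)) y else 0).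
Proof.
  induction f; intros j r Hj.
  - cbn [sm]. destruct r; simpl; ring.
  - rewrite (QE y f j r r) by auto.
    set (Q' := fun r => Qaux f (S j) r y).
    rewrite <- sm_scal.
    transitivity (sm (S r) (fun m => if (j * m <=? r)%nat then Am y j m * INR (j * m) * Q' (r - j * m)%nat else 0)
                + sm (S r) (fun m => if (j * m <=? r)%nat then Am y j m * (INR (r - j * m) * Q' (r - j * m)%nat) else 0)).
    { rewrite <- sm_plus. apply sm_ext. intros m _. unfold Q'.
      destruct (Nat.leb_spec (j * m) r); [|ring].
      replace (INR r) with (INR (j * m) + INR (r - j * m)) by (rewrite <- plus_INR; f_equal; lia). ring. }
    rewrite (sm_shift f). f_equal.
    +
      rewrite sm_shift. rewrite Nat.mul_0_r. simpl (INR 0). rewrite Rmult_0_r, Rmult_0_l.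
      destruct (0 <=? r)%nat; rewrite Rplus_0_l.
      all: rewrite Nat.add_0_r.
      all: destruct (Nat.leb_spec j r) as [Hjr|Hjr].
      * destruct r as [|r1]; [lia|].
        rewrite (QE y f j (S r1 - j) r1) by (auto; lia).
        rewrite <- sm_scal. apply sm_ext. intros m _. unfold Q'.
        rewrite Nat.mul_succ_r.
        destruct (Nat.leb_spec (j * m + j) (S r1)); destruct (Nat.leb_spec (j * m) (S r1 - j)); try lia.
        -- replace (S r1 - (j * m + j))%nat with (S r1 - j - j * m)%nat by lia.
           unfold Am. rewrite plus_INR, mult_INR, fact_simpl, mult_INR. rewrite <- tech_pow_Rmult.
           assert (INR j <> 0) by (apply not_0_INR; lia).
           assert (INR (S m) <> 0) by (apply not_0_INR; lia).
           assert (INR (fact m) <> 0) by apply INR_fact_neq_0. rewrite S_INR in *. field; repeat split; auto.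
        -- ring.
      * apply sm_zero. intros m _. rewrite Nat.mul_succ_r.
        destruct (Nat.leb_spec (j * m + j) r); [lia|reflexivity].
      * destruct r as [|r1]; [lia|].
        rewrite (QE y f j (S r1 - j) r1) by (auto; lia).
        rewrite <- sm_scal. apply sm_ext. intros m _. unfold Q'.
        rewrite Nat.mul_succ_r.
        destruct (Nat.leb_spec (j * m + j) (S r1)); destruct (Nat.leb_spec (j * m) (S r1 - j)); try lia.
        -- replace (S r1 - (j * m + j))%nat with (S r1 - j - j * m)%nat by lia.
           unfold Am. rewrite plus_INR, mult_INR, fact_simpl, mult_INR. rewrite <- tech_pow_Rmult.
           assert (INR j <> 0) by (apply not_0_INR; lia).
           assert (INR (S m) <> 0) by (apply not_0_INR; lia).
           assert (INR (fact m) <> 0) by apply INR_fact_neq_0. rewrite S_INR in *. field; repeat split; auto.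
        -- ring.
      * apply sm_zero. intros m _. rewrite Nat.mul_succ_r.
        destruct (Nat.leb_spec (j * m + j) r); [lia|reflexivity].
    +
      transitivity (sm (S r) (fun m => sm f (fun i =>
          if (j * m <=? r)%nat then (if (S j + i <=? r - j * m)%nat then
             Am y j m * (y (S j + i)%nat * Q' (r - j * m - (S j + i))%nat) else 0) else 0))).
      { apply sm_ext. intros m _. destruct (j * m <=? r)%nat.
        - unfold Q'. rewrite (IHf (S j) (r - j * m)%nat) by lia. rewrite <- sm_scal.
          apply sm_ext. intros i _. destruct (S j + i <=? r - j * m)%nat; ring.
        - symmetry. apply sm_zero. auto. }
      rewrite sm_swap. apply sm_ext. intros i _.
      replace (j + S i)%nat with (S j + i)%nat by lia.
      destruct (Nat.leb_spec (S j + i) r).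
      * rewrite (QE y f j (r - (S j + i)) r) by (auto; lia). rewrite <- sm_scal.
        apply sm_ext. intros m _.
        destruct (Nat.leb_spec (j * m) r); destruct (Nat.leb_spec (S j + i) (r - j * m));
          destruct (Nat.leb_spec (j * m) (r - (S j + i))); try lia; try ring.
        unfold Q'. replace (r - j * m - (S j + i))%nat with (r - (S j + i) - j * m)%nat by lia. ring.
      * apply sm_zero. intros m _.
        destruct (Nat.leb_spec (j * m) r); destruct (Nat.leb_spec (S j + i) (r - j * m)); try lia; reflexivity.
Qed.


Lemma Qaux_r0 f j y : Qaux f j 0 y = 1.
Proof. destruct f; reflexivity. Qed.

Lemma Qaux_step y f : forall j r, (1 <= j)%nat -> (r < j + f)%nat -> Qaux (S f) j r y = Qaux f j r y.
Proof.
  induction f; intros j r Hj Hr.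
  - destruct r. rewrite !Qaux_r0; reflexivity.
    rewrite QS by auto. rewrite Nat.div_small by lia. cbn [sum_f_R0].
    rewrite Nat.mul_0_r, Nat.sub_0_r. simpl Qaux. ring.
  - rewrite (QS y (S f)) by auto. rewrite (QS y f) by auto.
    apply sum_eq. intros m _. rewrite IHf by lia. reflexivity.
Qed.

Lemma Qaux_f y d r j : (1 <= j)%nat -> Qaux (r + d) j r y = Qaux r j r y.
Proof. intros Hj. induction d. rewrite Nat.add_0_r; reflexivity.
  rewrite Nat.add_succ_r, Qaux_step by lia. exact IHd. Qed.

Lemma Q_newton y k : INR (S k) * Q (S k) y = sm (S k) (fun i => y (S i) * Q (k - i)%nat y).
Proof.
  unfold Q. rewrite NQ by lia. apply sm_ext. intros i Hi.
  destruct (Nat.leb_spec (1 + i) (S k)); [|lia].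
  replace (S k - (1 + i))%nat with (k - i)%nat by lia.
  rewrite <- (Qaux_f y (S i) (k - i) 1) by lia.
  replace (k - i + S i)%nat with (S k) by lia. reflexivity.
Qed.

Lemma Q_h n : forall k, Q k (fun r => Hr n r) = h n k.
Proof.
  intros k. induction k as [k IH] using lt_wf_ind. destruct k.
  - unfold Q. rewrite Qaux_r0, h_n0. reflexivity.
  - apply (Rmult_eq_reg_l (INR (S k))); [|apply not_0_INR; lia].
    rewrite Q_newton, h_newton. unfold conv. apply sm_ext. intros i Hi.
    rewrite IH by lia. reflexivity.
Qed.


Lemma cv_ext u v l : (forall n, u n = v n) -> Un_cv u l -> Un_cv v l.
Proof. intros E H eps He. destruct (H eps He) as [N HN]. exists N. intros n Hn.
  rewrite <- E. auto. Qed.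

Lemma cv_shift u l c : Un_cv u l -> Un_cv (fun n => u (n + c)%nat) l.
Proof. intros H eps He. destruct (H eps He) as [N HN]. exists N. intros n Hn.
  apply HN. lia. Qed.

Lemma cv_S u l : Un_cv u l -> Un_cv (fun n => u (S n)) l.
Proof. intros H. apply (cv_ext (fun n => u (n + 1)%nat)). intros; f_equal; lia.
  apply cv_shift; auto. Qed.

Lemma cv_squeeze0 a b : (forall n, 0 <= a n <= b n) -> Un_cv b 0 -> Un_cv a 0.
Proof. intros H Hb eps He. destruct (Hb eps He) as [N HN]. exists N. intros n Hn.
  specialize (HN n Hn). specialize (H n). unfold Rdist in *. rewrite Rminus_0_r in *.
  rewrite Rabs_right in * by lra. lra. Qed.

Lemma cv_scal0 u c : Un_cv u 0 -> Un_cv (fun n => c * u n) 0.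
Proof. intros H. replace 0 with (c * 0) by ring. apply CV_mult; auto.
  intros eps He. exists O. intros. unfold Rdist. rewrite Rminus_diag, Rabs_R0. auto. Qed.

Lemma cv_sm0 M (f : nat -> nat -> R) : (forall J, (J < M)%nat -> Un_cv (fun N => f N J) 0) ->
  Un_cv (fun N => sm M (f N)) 0.
Proof. induction M; intros H.
  - intros eps He. exists O. intros. cbn [sm]. unfold Rdist. rewrite Rminus_diag, Rabs_R0; auto.
  - cbn [sm]. replace 0 with (0 + 0) by ring. apply CV_plus.
    apply IHM; intros; apply H; lia. apply H; lia. Qed.

Lemma mono_cv u B : (forall n, u n <= u (S n)) -> (forall n, u n <= B) ->
  exists l, Un_cv u l /\ (forall n, u n <= l).
Proof. intros Hg Hb. destruct (Un_cv_crit u Hg) as [l Hl].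
  - exists B. intros x [i ->]. auto.
  - exists l. split; auto. apply growing_ineq; auto. Qed.

Lemma cv_char u l : (forall n, u n <= u (S n)) -> (forall n, u n <= l) ->
  (forall eps, 0 < eps -> exists n, l - eps < u n) -> Un_cv u l.
Proof. intros Hg Hb Ha eps He. destruct (Ha eps He) as [N HN]. exists N. intros n Hn.
  assert (u N <= u n).
  { clear HN. induction Hn. lra. specialize (Hg m). lra. }
  specialize (Hb n). unfold Rdist. rewrite Rabs_left1 by lra. lra. Qed.

Lemma le_by_arch a b C : 0 <= C -> (forall M, a <= b + C / INR (S M)) -> a <= b.
Proof. intros HC H. destruct (Rle_or_lt a b) as [|Hab]; auto. exfalso.
  destruct (INR_archimed (a - b) C) as [n Hn]; [lra|].
  specialize (H n). assert (0 < INR (S n)) by (apply lt_0_INR; lia).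
  assert (C / INR (S n) < a - b).
  { apply (Rmult_lt_reg_r (INR (S n))); auto. unfold Rdiv. rewrite Rmult_assoc, Rinv_l by lra.
    rewrite S_INR. assert (0 <= INR n) by apply pos_INR. nra. }
  lra. Qed.

Lemma sm_const_ge n f c : (forall i, (i<n)%nat -> c <= f i) -> INR n * c <= sm n f.
Proof. induction n; cbn [sm]; intros H; [simpl; lra|].
  assert (INR n * c <= sm n f) by (apply IHn; intros; apply H; lia).
  assert (c <= f n) by (apply H; lia). rewrite S_INR. lra. Qed.

Lemma sm_growing n f : (forall i, 0 <= f i) -> sm n f <= sm (S n) f.
Proof. intros H. cbn [sm]. specialize (H n). lra. Qed.


Definition Zs s M := sm M (fun J => / INR (S J) ^ s).

Lemma Zs2 n : sm (S n) (fun J => / INR (S J) ^ 2) <= 2 - / INR (S n).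
Proof. induction n.
  - cbn [sm]. change (INR 1) with 1. rewrite pow1, Rinv_1. lra.
  - change (sm (S (S n)) (fun J => / INR (S J) ^ 2)) with
      (sm (S n) (fun J => / INR (S J) ^ 2) + / INR (S (S n)) ^ 2).
    assert (Hx : 1 <= INR (S n)) by (rewrite <- INR_1; apply le_INR; lia).
    rewrite (S_INR (S n)). set (x := INR (S n)) in *.
    assert (E : / x - / (x + 1) - / (x + 1) ^ 2 = / (x * (x + 1) ^ 2)) by (field; lra).
    assert (0 < / (x * (x + 1) ^ 2)).
    { apply Rinv_0_lt_compat. apply Rmult_lt_0_compat; [lra|apply pow_lt; lra]. }
    lra.
Qed.

Lemma Zs_bound s M : (2 <= s)%nat -> Zs s M <= 2.
Proof. intros Hs. unfold Zs. apply Rle_trans with (sm M (fun J => / INR (S J) ^ 2)).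
  - apply sm_le. intros J _. assert (Hx : 1 <= INR (S J)) by (rewrite <- INR_1; apply le_INR; lia).
    apply Rinv_le_contravar. apply pow_lt; lra. apply Rle_pow; auto.
  - apply Rle_trans with (sm (S M) (fun J => / INR (S J) ^ 2)).
    apply sm_growing. intros; left; apply Rinv_0_lt_compat, pow_lt, lt_0_INR; lia.
    assert (H := Zs2 M). assert (0 < / INR (S M)) by (apply Rinv_0_lt_compat, lt_0_INR; lia). lra.
Qed.

Lemma Zs_grow s M : Zs s M <= Zs s (S M).
Proof. apply sm_growing. intros; left; apply Rinv_0_lt_compat, pow_lt, lt_0_INR; lia. Qed.

Lemma zeta_ex s : (2 <= s)%nat -> exists z, Un_cv (Zs s) z /\ forall M, Zs s M <= z.
Proof. intros Hs. apply (mono_cv _ 2). apply Zs_grow. intros; apply Zs_bound; auto. Qed.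

Lemma g_upper K z : (forall M, Zs (S (S K)) M <= z) -> forall N, g N 0 K <= INR (S K) * z.
Proof.
  intros Hz N. apply (le_by_arch _ _ (sm N (fun n => INR (fact n) * INR (S K) ^ n))).
  - apply sm_nonneg. intros; apply Rmult_le_pos; [apply pos_INR| apply pow_le, pos_INR].
  - intros M. rewrite (g_tele N M K).
    assert (A : sm M (fun J => V N J K) <= INR (S K) * Zs (S (S K)) M).
    { unfold Zs. rewrite <- sm_scal. apply sm_le. intros J _. apply (V_bounds N J K). }
    assert (B := g_small N M K). specialize (Hz M).
    assert (0 <= INR (S K)) by apply pos_INR.
    assert (INR (S K) * Zs (S (S K)) M <= INR (S K) * z) by (apply Rmult_le_compat_l; auto).
    lra.
Qed.

Lemma g0_h N K : g N 0 K = sm N (fun n => h (S n) K / INR (S n) ^ 2).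
Proof. unfold g. apply sm_ext. intros n _. rewrite h_F. rewrite fact_simpl, mult_INR.
  assert (INR (S n) <> 0) by (apply not_0_INR; lia). field. auto. Qed.

Lemma g_grow N K : g N 0 K <= g (S N) 0 K.
Proof. rewrite !g0_h. apply sm_growing. intros i. unfold Rdiv.
  apply Rmult_le_pos; [apply h_nonneg| left; apply Rinv_0_lt_compat, pow_lt, lt_0_INR; lia]. Qed.

Lemma null i : Un_cv (fun N => h (S N) i / INR (S N)) 0.
Proof.
  destruct (zeta_ex (S (S i))) as [z [_ Hz]]; [lia|].
  destruct (mono_cv (fun N => g N 0 i) (INR (S i) * z)) as [l [Hl Hle]].
  - intros; apply g_grow.
  - apply g_upper; auto.
  - intros eps He. destruct (Hl (eps / 8)) as [N0 HN0]; [lra|].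
    exists N0. intros N HN. 
    assert (A := HN0 (S N) ltac:(lia)). assert (A2 := Hle (S N + S N)%nat).
    unfold Rdist in *. 
    assert (Hx : 0 < INR (S N)) by (apply lt_0_INR; lia).
    assert (H0 : 0 <= h (S N) i / INR (S N)) by (unfold Rdiv; apply Rmult_le_pos; [apply h_nonneg|left; apply Rinv_0_lt_compat; lra]).
    rewrite Rminus_0_r, Rabs_right by lra.
    assert (D : h (S N) i / INR (S N) <= 4 * (g (S N + S N) 0 i - g (S N) 0 i)).
    { rewrite !g0_h, sm_add. 
      assert (L : INR (S N) * (h (S N) i / (2 * INR (S N)) ^ 2) <=
                  sm (S N) (fun j => h (S (S N + j)) i / INR (S (S N + j)) ^ 2)).
      { apply sm_const_ge. intros j Hj.
        assert (Hy : 0 < INR (S (S N + j))) by (apply lt_0_INR; lia).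
        assert (Hy2 : INR (S (S N + j)) <= 2 * INR (S N)).
        { replace (2 * INR (S N)) with (INR (S N + S N)) by (rewrite plus_INR; ring). apply le_INR; lia. }
        unfold Rdiv. apply Rmult_le_compat.
        - apply h_nonneg.
        - left; apply Rinv_0_lt_compat, pow_lt; lra.
        - replace (S (S N + j)) with (S N + S j)%nat by lia. apply h_mono.
        - apply Rinv_le_contravar. apply pow_lt; lra. apply pow_incr; lra. }
      replace (INR (S N) * (h (S N) i / (2 * INR (S N)) ^ 2)) with (h (S N) i / INR (S N) / 4) in L
        by (field; lra).
      lra. }
    rewrite Rabs_left1 in A by lra. lra.
Qed.

Lemma F_shift J m k : F J m k <= INR (fact J) * F 0 (J + m) k.
Proof.
  revert k; induction m; intros k.
  - destruct k.
    + assert (A := F_0 0 J). simpl (0 + J)%nat in A. rewrite Nat.add_0_r.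
      change (F J 0 0) with 1. simpl (fact 0) in A. rewrite INR_1 in A. lra.
    + change (F J 0 (S k)) with 0. apply Rmult_le_pos; [apply pos_INR|apply F_nonneg].
  - replace (J + S m)%nat with (S (J + m)) by lia.
    induction k.
    + rewrite F_S, (F_S 0 (J + m)), !pv_0. simpl (0 + S (J + m))%nat.
      replace (J + S m)%nat with (S (J + m)) by lia.
      specialize (IHm O).
      assert (0 < INR (S (J + m))) by (apply lt_0_INR; lia).
      unfold Rdiv. rewrite !Rplus_0_r. rewrite <- Rmult_assoc. apply Rmult_le_compat_r; [left; apply Rinv_0_lt_compat; lra|]. auto.
    + rewrite F_S, (F_S 0 (J + m)), !pv_S. simpl (0 + S (J + m))%nat.
      replace (J + S m)%nat with (S (J + m)) by lia.
      specialize (IHm (S k)).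
      assert (0 < INR (S (J + m))) by (apply lt_0_INR; lia).
      unfold Rdiv. rewrite <- Rmult_assoc. apply Rmult_le_compat_r; [left; apply Rinv_0_lt_compat; lra|]. 
      rewrite Rmult_plus_distr_l. lra.
Qed.

Lemma fact_mul a b : (fact a * fact b <= fact (b + a))%nat.
Proof. induction b. simpl. lia.
  rewrite fact_simpl. replace (S b + a)%nat with (S (b + a)) by lia. rewrite fact_simpl.
  assert (H := fact_neq_0 a). nia. Qed.

Lemma U_bound N J i : U N J i <= INR (S J) * (h (S (J + N)) i / INR (S (J + N))).
Proof.
  unfold U. assert (A := F_shift J (S N) i).
  replace (J + S N)%nat with (S (J + N)) in A by lia.
  assert (Hf : INR (fact N) * INR (fact J) * INR (S N) <= INR (fact (S (J + N)))).
  { rewrite <- !mult_INR. apply le_INR. assert (B := fact_mul (S N) J).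
    rewrite fact_simpl in B. replace (J + S N)%nat with (S (J + N)) in B by lia. nia. }
  assert (Hsn : 0 < INR (S N)) by (apply lt_0_INR; lia).
  assert (Hsj : 0 < INR (S (J + N))) by (apply lt_0_INR; lia).
  assert (Hc : INR (S (J + N)) <= INR (S J) * INR (S N)) by (rewrite <- mult_INR; apply le_INR; nia).
  rewrite h_F. set (f := F 0 (S (J + N)) i) in *.
  assert (Hf0 : 0 <= f) by apply F_nonneg.
  assert (H0 : 0 <= INR (fact N)) by apply pos_INR.
  apply Rle_trans with (INR (fact N) * (INR (fact J) * f)); [apply Rmult_le_compat_l; auto|].
  apply Rle_trans with (INR (fact (S (J + N))) * f / INR (S N)).
  { apply (Rmult_le_reg_r (INR (S N))); auto.
    replace (INR (fact (S (J + N))) * f / INR (S N) * INR (S N)) with (INR (fact (S (J + N))) * f) by (field; lra).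
    replace (INR (fact N) * (INR (fact J) * f) * INR (S N)) with
      (INR (fact N) * INR (fact J) * INR (S N) * f) by ring. apply Rmult_le_compat_r; auto. }
  set (P := INR (fact (S (J + N))) * f).
  assert (0 <= P) by (apply Rmult_le_pos; auto; apply pos_INR).
  unfold Rdiv. rewrite <- Rmult_assoc, (Rmult_comm (INR (S J))), Rmult_assoc.
  apply Rmult_le_compat_l; auto.
  apply (Rmult_le_reg_l (INR (S N))); auto. rewrite Rinv_r by lra.
  apply (Rmult_le_reg_r (INR (S (J + N)))); auto.
  replace (INR (S N) * (INR (S J) * / INR (S (J + N))) * INR (S (J + N))) with (INR (S N) * INR (S J)) by (field; lra).
  lra.
Qed.

Lemma corr_null K M : Un_cv (fun N => sm M (fun J => sm (S K) (fun i => U N J i))) 0.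
Proof.
  apply cv_sm0. intros J _. apply (cv_sm0 (S K) (fun N i => U N J i)). intros i _.
  apply (cv_squeeze0 _ (fun N => INR (S J) * (h (S (J + N)) i / INR (S (J + N))))).
  - intros N. split; [apply U_nonneg| apply U_bound].
  - apply cv_scal0. apply (cv_ext (fun N => (fun n => h (S n) i / INR (S n)) (N + J)%nat)).
    + intros N. replace (N + J)%nat with (J + N)%nat by lia. reflexivity.
    + exact (cv_shift (fun n => h (S n) i / INR (S n)) 0 J (null i)).
Qed.

Lemma main K : exists z, Un_cv (Zs (S (S K))) z /\ Un_cv (fun N => g N 0 K) (INR (S K) * z).
Proof.
  destruct (zeta_ex (S (S K))) as [z [Hz Hzle]]; [lia|]. exists z. split; auto.
  apply cv_char.
  - intros; apply g_grow.
  - apply g_upper; auto.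
  - intros eps He.
    assert (HK : 0 < INR (S K)) by (apply lt_0_INR; lia).
    destruct (Hz (eps / (2 * INR (S K)))) as [M HM].
    { apply Rdiv_lt_0_compat; lra. }
    specialize (HM M ltac:(lia)). unfold Rdist in HM.
    destruct (corr_null K M (eps / 2)) as [N HN]; [lra|].
    specialize (HN N ltac:(lia)). unfold Rdist in HN. rewrite Rminus_0_r in HN.
    exists N. rewrite (g_tele N M K).
    assert (G0 : 0 <= g N M K).
    { unfold g. apply sm_nonneg. intros n _. apply Rmult_le_pos; [|apply F_nonneg].
      unfold Rdiv. apply Rmult_le_pos; [apply pos_INR|left; apply Rinv_0_lt_compat, lt_0_INR; lia]. }
    assert (L : INR (S K) * Zs (S (S K)) M - sm M (fun J => sm (S K) (fun i => U N J i)) <= sm M (fun J => V N J K)).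
    { unfold Zs. rewrite <- sm_scal, <- sm_minus. apply sm_le. intros J _.
      destruct (V_bounds N J K) as [_ B]. unfold Rdiv in B. exact B. }
    assert (Hc := Rle_abs (sm M (fun J => sm (S K) (fun i => U N J i)))).
    assert (Hzz : z - eps / (2 * INR (S K)) < Zs (S (S K)) M).
    { assert (X := Rle_abs (z - Zs (S (S K)) M)). rewrite Rabs_minus_sym in X. lra. }
    assert (INR (S K) * (z - eps / (2 * INR (S K))) < INR (S K) * Zs (S (S K)) M)
      by (apply Rmult_lt_compat_l; auto).
    replace (INR (S K) * (z - eps / (2 * INR (S K)))) with (INR (S K) * z - eps / 2) in * by (field; lra).
    lra.
Qed.


Lemma ident k N :
  sm (S N) (fun i => h (S i) (S k) / (INR (S i) + 1) ^ 2) + sm (S N) (fun i => h (S i) k / INR (S i) ^ 3)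
  = g (S (S N)) 0 (S k) - h (S (S N)) k / INR (S (S N)) ^ 3.
Proof.
  rewrite g0_h. induction N.
  - cbn [sm]. rewrite (h_SS 1 k). rewrite !h_1. change (INR 1) with 1.
    replace (INR 2) with 2 by (simpl; ring). field.
  - change (sm (S (S N)) ?f) with (sm (S N) f + f (S N)).
    change (sm (S (S (S N))) ?f) with (sm (S (S N)) f + f (S (S N))).
    cbv beta.
    replace (sm (S N) (fun i => h (S i) (S k) / (INR (S i) + 1) ^ 2) + h (S (S N)) (S k) / (INR (S (S N)) + 1) ^ 2 +
     (sm (S N) (fun i => h (S i) k / INR (S i) ^ 3) + h (S (S N)) k / INR (S (S N)) ^ 3))
     with ((sm (S N) (fun i => h (S i) (S k) / (INR (S i) + 1) ^ 2) + sm (S N) (fun i => h (S i) k / INR (S i) ^ 3))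
       + h (S (S N)) (S k) / (INR (S (S N)) + 1) ^ 2 + h (S (S N)) k / INR (S (S N)) ^ 3) by ring.
    rewrite IHN. rewrite (h_SS (S (S N)) k). rewrite (S_INR (S (S N))).
    assert (0 < INR (S (S N))) by (apply lt_0_INR; lia).
    field. lra.
Qed.

Theorem mainTheorem17 (k : nat) (hk : (1 <= k)%nat) :
  exists l1 l2 z : R,
    Un_cv (fun N => sum_f_R0 (fun i =>
             Q (S k) (fun r => Hr (S i) r) / (INR (S i) + 1) ^ 2) N) l1 /\
    Un_cv (fun N => sum_f_R0 (fun i =>
             Q k (fun r => Hr (S i) r) / INR (S i) ^ 3) N) l2 /\
    Un_cv (fun N => sum_f_R0 (fun i => / INR (S i) ^ (k + 3)) N) z /\
    l1 + l2 = (INR k + 2) * z.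
Proof.
  destruct (main (S k)) as [z [Hz Hg]].
  assert (Hzle : forall M, Zs (S (S (S k))) M <= z) by (apply growing_ineq; auto; intro; apply Zs_grow).
  assert (Hup := g_upper (S k) z Hzle).
  set (An := fun N => sm (S N) (fun i => h (S i) (S k) / (INR (S i) + 1) ^ 2)).
  set (Bn := fun N => sm (S N) (fun i => h (S i) k / INR (S i) ^ 3)).
  assert (Ha0 : forall i, 0 <= h (S i) (S k) / (INR (S i) + 1) ^ 2).
  { intros i. unfold Rdiv. apply Rmult_le_pos; [apply h_nonneg|].
    left; apply Rinv_0_lt_compat, pow_lt. rewrite <- S_INR. apply lt_0_INR; lia. }
  assert (Hb0 : forall i, 0 <= h (S i) k / INR (S i) ^ 3).
  { intros i. unfold Rdiv. apply Rmult_le_pos; [apply h_nonneg|].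
    left; apply Rinv_0_lt_compat, pow_lt. apply lt_0_INR; lia. }
  assert (He0 : forall N, 0 <= h (S (S N)) k / INR (S (S N)) ^ 3) by (intros; apply Hb0).
  assert (HAB : forall N, An N + Bn N <= INR (S (S k)) * z).
  { intros N. unfold An, Bn. rewrite ident. specialize (Hup (S (S N))). specialize (He0 N). lra. }
  assert (HA0 : forall N, 0 <= An N) by (intros; apply sm_nonneg; auto).
  assert (HB0 : forall N, 0 <= Bn N) by (intros; apply sm_nonneg; auto).
  destruct (mono_cv An (INR (S (S k)) * z)) as [l1 [Hl1 _]].
  { intros; apply sm_growing; auto. }
  { intros N. specialize (HAB N). specialize (HB0 N). lra. }
  destruct (mono_cv Bn (INR (S (S k)) * z)) as [l2 [Hl2 _]].
  { intros; apply sm_growing; auto. }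
  { intros N. specialize (HAB N). specialize (HA0 N). lra. }
  exists l1, l2, z. split; [|split; [|split]].
  - apply (cv_ext An); auto. intros N. unfold An. rewrite sum_f_R0_sm. apply sm_ext.
    intros i _. rewrite Q_h. reflexivity.
  - apply (cv_ext Bn); auto. intros N. unfold Bn. rewrite sum_f_R0_sm. apply sm_ext.
    intros i _. rewrite Q_h. reflexivity.
  - apply (cv_ext (fun N => Zs (S (S (S k))) (S N))).
    + intros N. rewrite sum_f_R0_sm. unfold Zs. replace (k + 3)%nat with (S (S (S k))) by lia. reflexivity.
    + apply cv_S. auto.
  - assert (C1 : Un_cv (fun N => An N + Bn N) (l1 + l2)) by (apply CV_plus; auto).
    assert (C2 : Un_cv (fun N => An N + Bn N) (INR (S (S k)) * z - 0)).
    { apply (cv_ext (fun N => g (S (S N)) 0 (S k) - h (S (S N)) k / INR (S (S N)) ^ 3)).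
      - intros N. unfold An, Bn. rewrite ident. reflexivity.
      - apply CV_minus.
        + apply (cv_ext (fun N => g (N + 2) 0 (S k))). intros; f_equal; lia.
          exact (cv_shift (fun N => g N 0 (S k)) _ 2 Hg).
        + apply (cv_squeeze0 _ (fun N => h (S (S N)) k / INR (S (S N)))).
          * intros N. split; auto. unfold Rdiv. apply Rmult_le_compat_l; [apply h_nonneg|].
            assert (Hx : 1 <= INR (S (S N))) by (rewrite <- INR_1; apply le_INR; lia).
            apply Rinv_le_contravar; [lra|]. rewrite <- (pow_1 (INR (S (S N)))) at 1.
            apply Rle_pow; auto; lia.
          * exact (cv_S (fun N => h (S N) k / INR (S N)) 0 (null k)). }
    rewrite (UL_sequence _ _ _ C1 C2). rewrite Rminus_0_r.
    rewrite !S_INR. ring.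
Qed.
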